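(* Let $E$ be a graph and $X\subseteq{\rm Reg}(E)$. Then $D(\partial_X(E))\delta_0=\{a\delta_0:a\in D(\partial_X(E))\}$ is a maximal commutative subring of $D(\partial_X(E))\rtimes_\alpha\mathbb F$ (i.e., every element of $D(\partial_X(E))\rtimes_\alpha\mathbb F$ commuting with all of $D(\partial_X(E))\delta_0$ lies in $D(\partial_X(E))\delta_0$) if and only if $E$ satisfies Relative Condition (L).
   Context: Let $K$ be a field and $E=(E^0,E^1,r,s)$ a directed graph. A vertex $v$ is a sink if $s^{-1}(v)=\emptyset$, regular if $s^{-1}(v)$ is finite and nonempty; ${\rm Reg}(E)$ is the set of regular vertices; $Y={\rm Reg}(E)\setminus X$. Finite paths are $\xi_1\cdots\xi_n$ with $r(\xi_i)=s(\xi_{i+1})$, vertices being paths of length $0$; $E^\infty$ is the set of infinite paths. A cycle is a path $e_1\cdots e_n$ ($n\ge1$) with $r(e_n)=s(e_1)$ and $s(e_i)\ne s(e_j)$ for $i\neq j$; an exit is an edge $e$ with $s(e)=s(e_i)$ for some $i$ and $e\ne e_i$. $E$ satisfies Relative Condition (L) if every cycle $e_1\cdots e_n$ with $s(e_i)\notin Y$ for all $i$ has an exit. The relative boundary path space is $\partial_X(E)=E^\infty\cup\{\xi \text{ finite path}: r(\xi)\text{ is a sink}\}\cup\{\xi\text{ finite path}: r(\xi)\in Y\}$. Let $\mathbb F$ be the free group on $E^1$ with identity $0$, and $W$ the set of finite paths of length $\ge1$, viewed in $\mathbb F$. Define subsets of $\partial_X(E)$: $U_0=\partial_X(E)$; $U_{b^{-1}}=\{\xi: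 s(\xi)=r(b)\}$ for $b\in W$; $U_a=\{\xi: \xi_1\cdots\xi_{|a|}=a\}$ for $a\in W$; $U_{ab^{-1}}=U_a$ for $a,b\in W$ with $r(a)=r(b)$ and $a_{|a|}\ne b_{|b|}$; $U_c=\emptyset$ for all other $c$; and $U_v=\{\xi: s(\xi)=v\}$ for $v\in E^0$. Maps $\theta_c:U_{c^{-1}}\to U_c$: $\theta_0={\rm id}$; $\theta_b(\xi)=b\xi$ for $b\in W$; $\theta_{b^{-1}}$ deletes the initial segment $b$ (sending $b$ to $r(b)$); $\theta_{ab^{-1}}$ deletes the initial segment $b$ and prepends $a$. Let $1_c$, $1_v$ be the characteristic functions of $U_c$, $U_v$ (functions $\partial_X(E)\to K$). Put $D_0=D(\partial_X(E))={\rm span}_K(\{1_p:p\ne0\}\cup\{1_v:v\in E^0\})$ and $D_p={\rm span}_K\{1_p1_q:q\in\mathbb F\}$ for $p\neq0$; $\alpha_p:D_{p^{-1}}\to D_p$, $\alpha_p(f)=f\circ\theta_{p^{-1}}$ on $U_p$ and $0$ elsewhere. $D(\partial_X(E))\rtimes_\alpha\mathbb F$ is the set of finite sums $\sum a_t\delta_t$, $a_t\in D_t$, with multiplication $(a_t\delta_t)(b_s\delta_s)=\alpha_t(\alpha_{t^{-1}}(a_t)b_s)\delta_{ts}$. *)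

(* Defs.v *)
From HB Require Import structures.
From mathcomp Require Import all_boot all_order all_algebra.
From Stdlib Require Import ClassicalEpsilon.
From Stdlib Require List.
Set Implicit Arguments. Unset Strict Implicit. Unset Printing Implicit Defensive.
Import GRing.Theory.
Local Open Scope ring_scope.

Definition decP (P : Prop) : bool :=
  if excluded_middle_informative P then true else false.

(* A directed graph E = (E^0, E^1, r, s); vertices and edges are arbitrary
   types with (classically always available) decidable equality. *)
Record graph := Graph {
  vert : eqType;
  edge : eqType;
  gr : edge -> vert;
  gs : edge -> vert
}.

Section GraphAlgebra.
Variable E : graph.
Variable X : vert E -> Prop.
Variable K : fieldType.

Local Notation V := (vert E).
Local Notation Ed := (edge E).
Local Notation r := (@gr E).
Local Notation s := (@gs E).

Definition is_sink (v : V) : Prop := forall e : Ed, s e <> v.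
Definition is_regular (v : V) : Prop :=
  (exists e : Ed, s e = v) /\ (exists l : seq Ed, forall e, s e = v -> e \in l).
Definition Yset (v : V) : Prop := is_regular v /\ ~ X v.

Definition consec (e f : Ed) : bool := r e == s f.
Definition ispath (a : seq Ed) : bool := (a != [::]) && sorted consec a.

(* Paths: a finite path is a start vertex together with its list of edges
   (length 0 = the vertex itself); an infinite path is a sequence of edges. *)
Inductive bpath : Type :=
| BFin of V & seq Ed
| BInf of (nat -> Ed).

Definition valid (xi : bpath) : Prop :=
  match xi with
  | BFin v p => sorted consec p /\ (if p is e :: _ then s e = v else True)
  | BInf f => forall i, r (f i) = s (f i.+1)
  end.

Definition bsrc (xi : bpath) : V :=
  match xi with BFin v _ => v | BInf f => s (f 0%N) end.

Definition frange (v : V) (p : seq Ed) : V := last v (map r p).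

Definition boundary (xi : bpath) : Prop :=
  valid xi /\
  match xi with
  | BInf _ => True
  | BFin v p => is_sink (frange v p) \/ Yset (frange v p)
  end.

Definition hasprefix (xi : bpath) (a : seq Ed) : Prop :=
  match xi with
  | BFin _ p => prefix a p
  | BInf f => a = mkseq f (size a)
  end.

Definition prepend (a : seq Ed) (xi : bpath) : bpath :=
  match xi with
  | BFin v p => BFin (if a is e :: _ then s e else v) (a ++ p)
  | BInf f => BInf (fun i => if (i < size a)%N then nth (f 0%N) a i
                             else f (i - size a)%N)
  end.

Definition dropp (n : nat) (xi : bpath) : bpath :=
  match xi with
  | BFin v p => BFin (last v (map r (take n p))) (drop n p)
  | BInf f => BInf (fun i => f (i + n)%N)
  end.

(* The free group F on E^1: reduced words of letters (b, e), where
   (true, e) = e and (false, e) = e^{-1}; the identity 0 is [::]. *)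
Definition letter := (bool * Ed)%type.
Definition word := seq letter.
Definition not_cancel (l l' : letter) : bool := ~~ ((l.2 == l'.2) && (l.1 != l'.1)).
Definition reduced (w : word) : bool := sorted not_cancel w.
Definition push (l : letter) (w : word) : word :=
  match w with
  | l' :: w' => if (l'.2 == l.2) && (l'.1 != l.1) then w' else l :: w
  | [::] => [:: l]
  end.
Definition wmul (u w : word) : word := foldr push w u.
Definition winv (w : word) : word := rev (map (fun l : letter => (~~ l.1, l.2)) w).

(* Classification of c in F:  0, a (a in W), b^{-1} (b in W),
   a b^{-1} (a,b in W, r(a)=r(b), a_{|a|} <> b_{|b|}), or other. *)
Inductive wkind :=
| K0 | KPos of seq Ed | KNeg of seq Ed | KMix of seq Ed & seq Ed | KNone.

Definition classify (w : word) : wkind :=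
  let n := find (fun l : letter => ~~ l.1) w in
  let a := map snd (take n w) in
  let rest := drop n w in
  let b := rev (map snd rest) in
  if w == [::] then K0
  else if ~~ all (fun l : letter => ~~ l.1) rest then KNone
  else if b == [::] then (if ispath a then KPos a else KNone)
  else if a == [::] then (if ispath b then KNeg b else KNone)
  else match a, b with
       | ea :: a', eb :: b' =>
           if [&& ispath a, ispath b, r (last ea a') == r (last eb b')
                 & last ea a' != last eb b']
           then KMix a b else KNone
       | _, _ => KNone
       end.

Definition U (c : word) (xi : bpath) : Prop :=
  match classify c with
  | K0 => boundary xi
  | KPos a => boundary xi /\ hasprefix xi a
  | KNeg b => boundary xi /\ (if b is eb :: b' then bsrc xi = r (last eb b') else False)
  | KMix a _ => boundary xi /\ hasprefix xi a
  | KNone => False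
  end.

Definition Uv (v : V) (xi : bpath) : Prop := boundary xi /\ bsrc xi = v.

(* the maps theta_c : U_{c^{-1}} -> U_c (identity outside their domain) *)
Definition theta (c : word) (xi : bpath) : bpath :=
  match classify c with
  | K0 => xi
  | KPos a => prepend a xi
  | KNeg b => dropp (size b) xi
  | KMix a b => prepend a (dropp (size b) xi)
  | KNone => xi
  end.

(* K-valued functions on paths; all functions built below vanish outside
   partial_X(E), so they are functions on partial_X(E). *)
Definition fn := bpath -> K.
Definition ind (P : bpath -> Prop) : fn := fun xi => if decP (P xi) then 1 else 0.
Definition one (c : word) : fn := ind (U c).
Definition onev (v : V) : fn := ind (Uv v).

Inductive span (S : fn -> Prop) : fn -> Prop :=
| span0 : span S (fun _ => 0)
| spanS (k : K) (g f : fn) : S g -> span S f -> span S (fun xi => k * g xi + f xi).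

Definition D0 : fn -> Prop :=
  span (fun g => (exists p, [/\ reduced p, p != [::] & g = one p]) \/
                 (exists v, g = onev v)).
Definition Dp (p : word) : fn -> Prop :=
  span (fun g => exists q, reduced q /\ g = (fun xi => one p xi * one q xi)).
Definition Dt (t : word) : fn -> Prop := if t == [::] then D0 else Dp t.

Definition alpha (p : word) (f : fn) : fn :=
  fun xi => if decP (U p xi) then f (theta (winv p) xi) else 0.

(* Crossed product D(partial_X(E)) x|_alpha F: an element sum a_t delta_t is
   given by a finite list of pairs (t, a_t) with t in F and a_t in D_t. *)
Definition cp := seq (word * fn).
Definition cp_elem (x : cp) : Prop :=
  forall pr, List.In pr x -> reduced pr.1 /\ Dt pr.1 pr.2.
Definition coef (x : cp) (t : word) : fn :=
  fun xi => \sum_(pr <- x | pr.1 == t) pr.2 xi.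
Definition cp_eq (x y : cp) : Prop := forall t xi, coef x t xi = coef y t xi.
(* (a_t delta_t)(b_s delta_s) = alpha_t(alpha_{t^{-1}}(a_t) b_s) delta_{ts} *)
Definition cp_mul (x y : cp) : cp :=
  [seq (wmul p.1 q.1,
        alpha p.1 (fun xi => alpha (winv p.1) p.2 xi * q.2 xi)) | p <- x, q <- y].
Definition delta0 (a : fn) : cp := [:: ([::], a)].

Definition D0_maximal_commutative : Prop :=
  forall x : cp, cp_elem x ->
    (forall b, D0 b -> cp_eq (cp_mul x (delta0 b)) (cp_mul (delta0 b) x)) ->
    exists a, D0 a /\ cp_eq x (delta0 a).

Definition is_cycle (c : seq Ed) : Prop :=
  ispath c /\
  (match c with e :: c' => r (last e c') = s e | [::] => False end) /\
  uniq (map s c).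

Definition rel_condL : Prop :=
  forall c : seq Ed, is_cycle c -> (forall e, e \in c -> ~ Yset (s e)) ->
    exists (e : Ed) (i : nat),
      (i < size c)%N /\ s e = s (nth e c i) /\ e <> nth e c i.

End GraphAlgebra.

(* Main.v *)
From HB Require Import structures.
From mathcomp Require Import all_boot all_order all_algebra.
From Stdlib Require Import ClassicalEpsilon Classical FunctionalExtensionality.
From Stdlib Require List.
From mathcomp Require Import zify.
Require Import Defs.
Set Implicit Arguments. Unset Strict Implicit. Unset Printing Implicit Defensive.
Import GRing.Theory.

Lemma decPT (Q : Prop) : Q -> decP Q = true.
Proof. by rewrite /decP; case: excluded_middle_informative. Qed.
Lemma decPF (Q : Prop) : ~ Q -> decP Q = false.
Proof. by rewrite /decP; case: excluded_middle_informative. Qed.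
Lemma decPE (Q : Prop) : decP Q = true <-> Q.
Proof. by rewrite /decP; case: excluded_middle_informative. Qed.

Section Words.
Variable E : graph.
Local Notation Ed := (edge E).
Local Notation r := (@gr E).
Local Notation s := (@gs E).

Definition pos (a : seq Ed) : word E := map (fun e => (true, e)) a.
Definition neg (b : seq Ed) : word E := winv (pos b).

Lemma winvK (w : word E) : winv (winv w) = w.
Proof.
rewrite /winv map_rev revK -map_comp -[RHS]map_id; apply: eq_map => -[b e] /=.
by rewrite negbK.
Qed.

Lemma winv_cat (u w : word E) : winv (u ++ w) = winv w ++ winv u.
Proof. by rewrite /winv map_cat rev_cat. Qed.

Lemma winv_neg b : winv (neg b) = pos b.
Proof. by rewrite /neg winvK. Qed.

Lemma find_pos a (w : word E) :
  find (fun l : letter E => ~~ l.1) (pos a ++ w) = size a + find (fun l : letter E => ~~ l.1) w.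
Proof. by elim: a => //= e a ->. Qed.

Lemma neg_all b : all (fun l : letter E => ~~ l.1) (neg b).
Proof. by rewrite /neg /winv all_rev all_map; apply/allP => e /=; rewrite /pos; case/mapP => x _ ->. Qed.

Lemma snd_neg b : rev (map snd (neg b)) = b.
Proof. by rewrite /neg /winv /pos map_rev revK -!map_comp map_id. Qed.

Lemma snd_pos a : map snd (pos a) = a.
Proof. by rewrite /pos -map_comp map_id. Qed.

Lemma size_pos a : size (pos a) = size a.
Proof. by rewrite size_map. Qed.

Lemma classify_pn a b :
  classify (pos a ++ neg b) =
  if (pos a ++ neg b) == [::] then K0 E
  else if b == [::] then (if ispath a then KPos a else KNone E)
  else if a == [::] then (if ispath b then KNeg b else KNone E)
  else match a, b with
       | ea :: a', eb :: b' =>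
           if [&& ispath a, ispath b, r (last ea a') == r (last eb b')
                 & last ea a' != last eb b']
           then KMix a b else KNone E
       | _, _ => KNone E
       end.
Proof.
rewrite /classify find_pos.
have -> : find (fun l : letter E => ~~ l.1) (neg b) = 0%N.
  by move: (neg_all b); case: (neg b) => //= l w /andP[->].
rewrite addn0 take_size_cat ?size_pos // drop_size_cat ?size_pos //.
by rewrite snd_pos snd_neg neg_all.
Qed.

Lemma take_find_pos (w : word E) :
  let n := find (fun l : letter E => ~~ l.1) w in
  take n w = pos (map snd (take n w)).
Proof.
elim: w => //= -[[] e] w IH //=.
by rewrite IH /pos -!map_comp /=; congr (_ :: _); apply: eq_map.
Qed.

Lemma all_neg (w : word E) : all (fun l : letter E => ~~ l.1) w ->
  neg (rev (map snd w)) = w.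
Proof.
move=> H; rewrite /neg /winv /pos -map_comp map_rev revK -map_comp.
rewrite -[RHS]map_id; apply/eq_in_map => -[b e] /= Hm.
by move/allP: H => /(_ _ Hm) /= /negPf ->.
Qed.

Lemma classify_cases (w : word E) :
  w = [::] \/ classify w = KNone E \/ exists a b, w = pos a ++ neg b.
Proof.
case: (eqVneq w [::]) => [->|Hw]; first by left.
right; set n := find (fun l : letter E => ~~ l.1) w.
case Ha: (all (fun l : letter E => ~~ l.1) (drop n w)).
  right; exists (map snd (take n w)), (rev (map snd (drop n w))).
  by rewrite all_neg // -take_find_pos cat_take_drop.
by left; rewrite /classify (negPf Hw) -/n Ha.
Qed.

Lemma classify_nil : classify ([::] : word E) = K0 E.
Proof. by []. Qed.

End Words.

Section Main.
Variable E : graph.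
Variable X : vert E -> Prop.
Variable K : fieldType.
Local Notation V := (vert E).
Local Notation Ed := (edge E).
Local Notation r := (@gr E).
Local Notation s := (@gs E).
Local Notation bpath := (bpath E).
Local Open Scope ring_scope.

Lemma prepend_nil (xi : bpath) : prepend [::] xi = xi.
Proof.
case: xi => //= f; congr BInf; apply: functional_extensionality => i.
by rewrite subn0.
Qed.

Lemma dropp0 (xi : bpath) : dropp 0 xi = xi.
Proof.
case: xi => [v p|f] /=; first by rewrite take0 drop0.
by congr BInf; apply: functional_extensionality => i; rewrite addn0.
Qed.

Lemma hasprefix_nil (xi : bpath) : hasprefix xi [::].
Proof. by case: xi => [v p|f] //=; apply: prefix0s. Qed.

Definition pre (n : nat) (xi : bpath) : seq Ed :=
  match xi with BFin _ p => take n p | BInf f => mkseq f n end.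

Lemma hasprefixE (xi : bpath) a : hasprefix xi a <-> pre (size a) xi = a.
Proof.
case: xi => [v p|f] /=; last by split=> ->; rewrite ?size_mkseq.
by rewrite prefixE; split => [/eqP|->].
Qed.

Lemma pre_take m n (xi : bpath) : (m <= n)%N -> pre m xi = take m (pre n xi).
Proof.
move=> mn; case: xi => [v p|f] /=; first by rewrite take_takel.
by rewrite /mkseq -map_take take_iota (minn_idPl mn).
Qed.

Lemma size_pre n (xi : bpath) : (size (pre n xi) <= n)%N.
Proof. by case: xi => [v p|f] /=; rewrite ?size_mkseq // size_take; case: ifP => // /negbT; rewrite -leqNgt. Qed.

Lemma winv_pos (a : seq Ed) : winv (pos a) = neg a.
Proof. by []. Qed.

Lemma neg_cons0 (e : Ed) b : (neg (e :: b) == [::]) = false.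
Proof. by rewrite -size_eq0 /neg /winv size_rev !size_map. Qed.

Lemma theta_form (t : word E) : t != [::] -> classify t <> KNone E ->
  exists a u : seq Ed, u != a /\ forall xi, U X t xi ->
    hasprefix xi a /\ theta (winv t) xi = prepend u (dropp (size a) xi).
Proof.
case: (classify_cases t) => [->|[->|[a [b ->]]]] // Ht.
rewrite winv_cat winv_neg winv_pos /U /theta !classify_pn.
case: a Ht => [|ea a']; case: b => [|eb b'] //=; rewrite ?neg_cons0 /=.
- case: ifP => // Hp _; exists [::], [:: eb & b']; split => // xi [_ Hxi].
  by split; [apply: hasprefix_nil|rewrite dropp0].
- case: ifP => // Hp _; exists [:: ea & a'], [::]; split => // xi [_ Hxi].
  by rewrite prepend_nil.
- case: ifP => // /and4P[Ha Hb Hr Hl] _.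
  rewrite Ha Hb eq_sym Hr eq_sym Hl /=.
  exists [:: ea & a'], [:: eb & b']; split => [|xi [_ Hxi]] //.
  apply/negP => /eqP [E1 E2]; move: Hl; by rewrite E1 E2 eqxx.
Qed.

Definition per (a u : seq Ed) := ((size a - size u) + (size u - size a))%N.

Lemma fixed_periodic (a u : seq Ed) (xi : bpath) : u != a -> hasprefix xi a ->
  prepend u (dropp (size a) xi) = xi ->
  exists f, xi = BInf f /\ (0 < per a u)%N /\
    forall j, (size a <= j)%N -> f (j + per a u)%N = f j.
Proof.
move=> Hua; case: xi => [v p|f] /=.
  move=> Hp [] _ Hup; case/negP: Hua; apply/eqP.
  move: Hp; rewrite prefixE => /eqP Hp.
  have Hs : (size a <= size p)%N by rewrite -Hp size_take_min geq_minr.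
  have Hsu : size u = size a.
    by move: (congr1 size Hup); rewrite size_cat size_drop; lia.
  by rewrite -Hp -Hup take_size_cat.
move=> Hp [] Hf; exists f; split => //.
have Hfi : forall i, f i = if (i < size u)%N then nth (f (0 + size a)%N) u i else f (i - size u + size a)%N.
  by move=> i; rewrite -{1}Hf.
case: (ltngtP (size u) (size a)) => Hc.
- split; first by rewrite /per; lia.
  move=> j Hj; rewrite (Hfi j) ifF; last by apply/negbTE; rewrite -leqNgt; lia.
  congr f; rewrite /per; lia.
- split; first by rewrite /per; lia.
  move=> j Hj; rewrite (Hfi (j + per a u)%N) ifF; last by apply/negbTE; rewrite -leqNgt /per; lia.
  congr f; rewrite /per; lia.
- case/negP: Hua; apply/eqP.
  apply: (@eq_from_nth _ (f 0%N)); first by [].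
  move=> i Hi; rewrite Hp nth_mkseq -?Hc // (Hfi i) Hi.
  by apply: set_nth_default.
Qed.

Lemma per_eq (f g : nat -> Ed) n k N : (0 < k)%N -> (n + k <= N)%N ->
  (forall j, (n <= j)%N -> f (j + k)%N = f j) ->
  (forall j, (n <= j)%N -> g (j + k)%N = g j) ->
  (forall j, (j < N)%N -> f j = g j) -> f = g.
Proof.
move=> Hk HN Hf Hg Hfg; apply: functional_extensionality => j.
elim: j {-2}j (leqnn j) => [|m IH] j Hj.
  move: Hj; rewrite leqn0 => /eqP ->; apply: Hfg; lia.
case: (ltnP j N) => HjN; first by apply: Hfg.
have -> : j = (j - k + k)%N by lia.
rewrite Hf ?Hg; try lia. by apply: IH; lia.
Qed.

Lemma sorted_mkseq (f : nat -> Ed) n :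
  (forall i, r (f i) = s (f i.+1)) -> sorted (@consec E) (mkseq f n).
Proof.
move=> Hf; apply/(sortedP (f 0%N)) => i; rewrite size_mkseq => Hi.
by rewrite !nth_mkseq ?(ltnW Hi) // /consec Hf.
Qed.

Lemma valid_pre (xi : bpath) n : valid xi -> sorted (@consec E) (pre n xi).
Proof.
case: xi => [v p|f] /=; first by case=> H _; apply: take_sorted.
by move=> Hf; apply: sorted_mkseq.
Qed.

Lemma ispath_pre (xi : bpath) n : valid xi -> pre n xi != [::] -> ispath (pre n xi).
Proof. by move=> Hv Hn; rewrite /ispath Hn valid_pre. Qed.

Lemma hasprefix_pre (xi : bpath) n : hasprefix xi (pre n xi).
Proof.
apply/hasprefixE; case: xi => [v p|f] /=; last by rewrite size_mkseq.
rewrite size_take; case: ifP => // /negbT; rewrite -leqNgt => Hp.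
by rewrite take_size take_oversize.
Qed.

Lemma indT (P : bpath -> Prop) xi : P xi -> ind K P xi = 1.
Proof. by move=> H; rewrite /ind decPT. Qed.
Lemma indF (P : bpath -> Prop) xi : ~ P xi -> ind K P xi = 0.
Proof. by move=> H; rewrite /ind decPF. Qed.

Lemma U_pos (d : seq Ed) xi : ispath d ->
  (U X (pos d) xi <-> boundary X xi /\ hasprefix xi d).
Proof.
case: d => [|e d] // Hd.
have -> : pos (e :: d) = pos (e :: d) ++ neg [::] by rewrite /neg /= cats0.
by rewrite /U classify_pn /= Hd.
Qed.

Lemma reduced_pos (d : seq Ed) : reduced (pos d).
Proof.
elim: d => [|e d IH] //; case: d IH => [|e' d] // IH.
by rewrite /reduced /= in IH *; rewrite IH /not_cancel /= andbF.
Qed.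

Lemma span_gen (S : fn E K -> Prop) g : S g -> span S g.
Proof.
move=> H; have := spanS 1 H (span0 S).
have -> // : (fun xi => 1 * g xi + 0) = g.
by apply: functional_extensionality => xi; rewrite mul1r addr0.
Qed.

Lemma span_lin (S : fn E K -> Prop) k f g : span S f -> span S g ->
  span S (fun xi => k * f xi + g xi).
Proof.
move=> Hf Hg; elim: Hf => [|k' g' f' Hg' Hf' IH].
  have -> // : (fun xi : bpath => k * 0 + g xi) = g.
  by apply: functional_extensionality => xi; rewrite mulr0 add0r.
have := spanS (k * k') Hg' IH.
have -> // : (fun xi => k * k' * g' xi + (k * f' xi + g xi)) =
  (fun xi => k * (k' * g' xi + f' xi) + g xi).
by apply: functional_extensionality => xi; rewrite mulrDr addrA mulrA.
Qed.

Lemma D0_pos (d : seq Ed) : ispath d -> D0 X (one X K (pos d)).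
Proof.
move=> Hd; apply: span_gen; left; exists (pos d); split => //; first exact: reduced_pos.
by case: d Hd.
Qed.

Lemma D0_v v : D0 X (onev X K v).
Proof. by apply: span_gen; right; exists v. Qed.

Lemma pre0 (xi : bpath) : pre 0 xi = [::].
Proof. by case: xi => [v p|f] //=; rewrite take0. Qed.

Lemma pre_inj (xi eta : bpath) : bsrc xi = bsrc eta ->
  (forall n, pre n xi = pre n eta) -> xi = eta.
Proof.
case: xi => [v p|f]; case: eta => [w q|g] /= Hs H.
- by rewrite Hs; congr BFin; move: (H (size p + size q)%N); rewrite !take_oversize //; lia.
- by move: (congr1 size (H (size p).+1)); rewrite size_mkseq size_take; case: ifP; lia.
- by move: (congr1 size (H (size q).+1)); rewrite size_mkseq size_take; case: ifP; lia.
- congr BInf; apply: functional_extensionality => i.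
  by rewrite -(nth_mkseq (f 0%N) f (ltnSn i)) H nth_mkseq.
Qed.

Lemma sep (xi eta : bpath) : boundary X xi -> xi <> eta ->
  exists b : fn E K, [/\ D0 X b, b xi = 1 & b eta = 0].
Proof.
move=> Hb Hne.
case: (classic (boundary X eta /\ bsrc eta = bsrc xi)) => [[Hbe Hse]|Hn]; last first.
  exists (onev X K (bsrc xi)); split; first exact: D0_v.
    by apply: indT.
  by apply: indF => -[H1 H2]; apply: Hn.
have [m Hm] : exists m, pre m xi != pre m eta.
  apply: NNPP => H; apply: Hne; apply: pre_inj => // n.
  by case: (eqVneq (pre n xi) (pre n eta)) => // Hn; case: H; exists n.
have Hvx : valid xi by case: Hb.
have Hve : valid eta by case: Hbe.
case: (eqVneq (size (pre m xi)) m) => Hsd.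
  have Hd0 : pre m xi != [::].
    by apply/eqP => H0; move: Hm Hsd; rewrite H0 /= => + H1; rewrite -H1 !pre0.
  exists (one X K (pos (pre m xi))); split.
  - by apply: D0_pos; apply: ispath_pre.
  - by apply: indT; apply/U_pos; [apply: ispath_pre|split => //; apply: hasprefix_pre].
  - apply: indF; rewrite U_pos; last by apply: ispath_pre.
    by case=> _ /hasprefixE; rewrite Hsd => H; rewrite H eqxx in Hm.
move: Hm Hsd Hb Hvx Hse; case: xi Hne => [v p|f] Hne /=; last by move=> _ /negP[]; apply/eqP; apply: size_mkseq.
move=> Hm Hsd Hb Hvx Hse.
have Hpm : (size p < m)%N by move: Hsd; rewrite size_take; case: ifP => //; lia.
rewrite take_oversize in Hm; last by lia.
case: (classic (hasprefix eta p)) => Hp; last first.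
  have Hp0 : p != [::] by apply/eqP => H0; apply: Hp; rewrite H0; apply: hasprefix_nil.
  have Hip : ispath p by rewrite /ispath Hp0; case: Hvx.
  exists (one X K (pos p)); split.
  - by apply: D0_pos.
  - by apply: indT; apply/U_pos => //; split => //=; apply: prefix_refl.
  - by apply: indF; rewrite U_pos //; case.
set d' := pre (size p).+1 eta.
have Hsd' : size d' = (size p).+1.
  move: Hp Hm; rewrite /d'; case: (eta) => [w q|g] /=; last by move=> _ _; rewrite size_map size_iota.
  rewrite prefixE => /eqP Hq Hm; rewrite size_take; case: ifP => // /negbT.
  rewrite -leqNgt leq_eqVlt => /orP[/eqP //|Hq'].
  case/eqP: Hm; rewrite take_oversize; last by lia.
  by rewrite -Hq take_oversize //; lia.
have Hd' : ispath d' by apply: ispath_pre => //; rewrite -size_eq0 Hsd'.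
exists (fun xi => 1 * onev X K v xi + ((-1) * one X K (pos d') xi + 0)); split.
- by apply: span_lin; [apply: D0_v|apply: span_lin; [apply: D0_pos|apply: span0]].
- rewrite /= /onev /one (@indT _ (BFin v p)) /=; last by split.
  rewrite (@indF _ (BFin v p)); first by rewrite mulr0 !addr0 mulr1.
  rewrite U_pos // => -[_ /hasprefixE]; rewrite Hsd' /= take_oversize // => Hpd.
  by move: (congr1 size Hpd); rewrite Hsd'; lia.
- rewrite /= /onev /one (@indT _ eta); last by split.
  rewrite (@indT _ eta); first by rewrite addr0 mulr1 mulN1r subrr.
  by apply/U_pos => //; split => //; apply: hasprefix_pre.
Qed.

Lemma extend (w : V) : exists z : bpath, boundary X z /\ bsrc z = w.
Proof.
case: (classic (exists e : Ed, True)) => [[e0 _]|Hno]; last first.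
  exists (BFin w [::]); split => //; split => //=; left => e _; apply: Hno; by exists e.
pose nxt (v : V) : Ed := epsilon (inhabits e0) (fun e => s e = v).
have Hnxt : forall v, ~ is_sink v -> s (nxt v) = v.
  move=> v Hv; apply: (epsilon_spec (inhabits e0) (fun e => s e = v)).
  by apply: NNPP => H; apply: Hv => e He; apply: H; exists e.
pose vs n := iter n (fun v => r (nxt v)) w.
pose es n := nxt (vs n).
have Hvs : forall n, vs n.+1 = r (es n) by [].
pose Pst n := is_sink (vs n) \/ Yset X (vs n).
case: (classic (exists n, Pst n)) => [Hex|Hno]; last first.
  exists (BInf es); split; last by rewrite /= Hnxt // => H; apply: Hno; exists 0%N; left.
  split => //= i; rewrite -Hvs Hnxt // => H; apply: Hno; exists i.+1; by left.
have HexB : exists n, decP (Pst n) by case: Hex => n Hn; exists n; apply: decPT.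
case: (ex_minnP HexB) => m /decPE Hm Hmin.
have Hnot : forall i, (i < m)%N -> ~ Pst i.
  move=> i Hi Hp; move: (Hmin i (decPT Hp)); lia.
have Hlast : forall k, last w (map r (mkseq es k)) = vs k.
  by elim=> [|k IH] //; rewrite mkseqS map_rcons last_rcons -Hvs.
exists (BFin w (mkseq es m)); split; last by [].
split; last by rewrite /frange Hlast.
split.
  apply/(sortedP e0) => i; rewrite size_mkseq => Him.
  rewrite !nth_mkseq ?(ltnW Him) // /consec -Hvs Hnxt // => Hs.
  by apply: (Hnot i.+1) => //; left.
case: m Hmin Hm Hnot {Hlast} => [|m] // Hmin Hm Hnot.
by rewrite /mkseq /= Hnxt // => Hs; apply: (Hnot 0%N) => //; left.
Qed.

Lemma prepend_pre (a : seq Ed) (z : bpath) N : (N <= size a)%N ->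
  pre N (prepend a z) = take N a.
Proof.
move=> HN; case: z => [v p|g] /=; first by rewrite takel_cat.
apply: (@eq_from_nth _ (g 0%N)); first by rewrite size_mkseq size_takel.
move=> j; rewrite size_mkseq => Hj; rewrite nth_mkseq // nth_take //.
by rewrite ifT ?(leq_trans Hj HN) //; apply: set_nth_default; apply: leq_trans HN.
Qed.

Lemma prepend_bsrc e (a : seq Ed) (z : bpath) : bsrc (prepend (e :: a) z) = s e.
Proof. by case: z. Qed.

Lemma prepend_boundary e (a : seq Ed) (z : bpath) : sorted (@consec E) (e :: a) ->
  boundary X z -> bsrc z = r (last e a) -> boundary X (prepend (e :: a) z).
Proof.
move=> Ha [Hv Hb] Hs; case: z Hv Hb Hs => [v p|g] /=.
  move=> [Hp Hh] Hb Hv; split; last first.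
    suff -> : frange (s e) (e :: a ++ p) = frange v p by [].
    rewrite /frange -cat_cons map_cat last_cat; case: p Hp Hh {Hb} => [|e1 p] // _ _.
    by rewrite /= last_map Hv.
  split => //; rewrite /= cat_path.
  move: Ha; rewrite /sorted => ->; case: p Hp Hh {Hb} => [|e1 p] //= Hp Hh.
  by rewrite Hp andbT /consec Hh Hv.
move=> Hg _ Hs; split => // i.
case: (ltngtP i.+1 (size a).+1) => Hi.
- by move/(sortedP (g 0%N)): Ha => /(_ i Hi) /eqP.
- have -> : (i.+1 - (size a).+1 = (i - (size a).+1).+1)%N by lia.
  exact: Hg.
- move: Hi => [->]; rewrite subnn Hs.
  by have := nth_last (g 0%N) (e :: a); rewrite /= => ->.
Qed.

Lemma sorted_mkseq_lt (f : nat -> Ed) n :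
  (forall i, (i.+1 < n)%N -> r (f i) = s (f i.+1)) -> sorted (@consec E) (mkseq f n).
Proof.
move=> Hf; apply/(sortedP (f 0%N)) => i; rewrite size_mkseq => Hi.
by rewrite !nth_mkseq ?(ltnW Hi) // /consec Hf.
Qed.

Lemma last_mkseq_r (f : nat -> Ed) l : (forall i, r (f i) = s (f i.+1)) ->
  last (s (f 0%N)) (map r (mkseq f l)) = s (f l).
Proof. by move=> Hf; elim: l => [|l IH] //; rewrite mkseqS map_rcons last_rcons Hf. Qed.

Lemma take_mkseq (f : nat -> Ed) m n : (m <= n)%N -> take m (mkseq f n) = mkseq f m.
Proof. by move=> mn; rewrite /mkseq -map_take take_iota (minn_idPl mn). Qed.

Lemma witness (f : nat -> Ed) n k N : rel_condL X -> boundary X (BInf f) -> (0 < k)%N ->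
  (forall j, (n <= j)%N -> f (j + k)%N = f j) ->
  exists z, [/\ boundary X z, bsrc z = s (f 0%N), pre N z = mkseq f N & z <> BInf f].
Proof.
move=> HL [Hv _] Hk Hper; rewrite /= in Hv.
pose Q d := decP ((0 < d)%N /\ exists i, (N <= i)%N /\ s (f i) = s (f (i + d)%N)).
have HQ : exists d, Q d.
  exists k; apply: decPT; split => //; exists (N + n)%N; split; first lia.
  by rewrite Hper //; lia.
case: (ex_minnP HQ) => d /decPE [Hd [i [Hi Hsi]]] Hmin.
pose c := mkseq (fun m => f (i + m)%N) d.
have Hsc : size c = d by rewrite size_mkseq.
have Hcyc : is_cycle c.
  split; [|split].
  - rewrite /ispath -size_eq0 Hsc -lt0n Hd /=.
    by apply: sorted_mkseq => j; rewrite addnS.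
  - case Hc: c => [|e c']; first by move: Hsc; rewrite Hc => /= Hd0; move: Hd; rewrite -Hd0.
    have He : e = f (i + 0)%N by move: (nth_mkseq e (fun m => f (i + m)%N) Hd); rewrite -/c Hc.
    have Hl : last e c' = f (i + d.-1)%N.
      have H1 : last e c' = last e c by rewrite Hc.
      rewrite H1 -nth_last Hsc nth_mkseq //; lia.
    rewrite Hl He Hv addn0 Hsi; congr (s (f _)); lia.
  - rewrite /c /mkseq -map_comp; apply/(mkseq_uniqP) => x y; rewrite !inE => Hx Hy /= Hxy.
    case: (ltngtP x y) => // Hxy'.
    + have := Hmin (y - x)%N (decPT _); rewrite -/Q.
      suff H : (0 < y - x)%N /\ exists i0, (N <= i0)%N /\ s (f i0) = s (f (i0 + (y - x))%N).
        move=> /(_ H); lia.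
      split; first lia; exists (i + x)%N; split; first lia.
      by rewrite Hxy; congr (s (f _)); lia.
    + have := Hmin (x - y)%N (decPT _); rewrite -/Q.
      suff H : (0 < x - y)%N /\ exists i0, (N <= i0)%N /\ s (f i0) = s (f (i0 + (x - y))%N).
        move=> /(_ H); lia.
      split; first lia; exists (i + y)%N; split; first lia.
      by rewrite -Hxy; congr (s (f _)); lia.
case: (classic (exists e, e \in c /\ Yset X (s e))) => [[e [He HY]]|HnY].
  move: He; rewrite /c /mkseq => /mapP [m]; rewrite mem_iota => /andP [_ Hm] Hem; rewrite Hem /= in HY.
  exists (BFin (s (f 0%N)) (mkseq f (i + m))); split => //.
  - split; last by right; rewrite /frange last_mkseq_r.
    split; first by apply: sorted_mkseq.
    by case: (i + m)%N.
  - by rewrite /= take_mkseq //; lia.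
have [e [j [Hj [Hse Hne]]]] : exists (e : Ed) (j : nat),
    (j < size c)%N /\ s e = s (nth e c j) /\ e <> nth e c j.
  apply: HL => // e He HY; apply: HnY; exists e; split => //.
rewrite Hsc in Hj; rewrite nth_mkseq // in Hse Hne.
set l := (i + j)%N in Hse Hne.
have [z' [Hz' Hsz']] := extend (r e).
pose g m := if (m < l)%N then f m else e.
exists (prepend (mkseq g l.+1) z'); split.
- rewrite /mkseq /=.
  apply: prepend_boundary => //.
  + have := @sorted_mkseq_lt g l.+1; rewrite /mkseq /=; apply => m Hm.
    rewrite /g; case: (ltnP m.+1 l) => H1; first by rewrite ifT ?(ltnW H1) // Hv.
    case: (ltnP m l) => H2; last by exfalso; lia.
    by rewrite Hse Hv; congr (s (f _)); lia.
  + have := nth_last e (g 0%N :: map g (iota 1 l)); rewrite /= => <-.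
    have Hn : nth e (g 0%N :: [seq g i | i <- iota 1 l]) l = g l := nth_mkseq e g (ltnSn l).
    by rewrite size_map size_iota Hn /g ltnn Hsz'.
- rewrite /mkseq /= prepend_bsrc /g; case: ifP => // H0.
  by rewrite Hse; have -> : l = 0%N by lia.
- rewrite prepend_pre ?size_mkseq; last by lia.
  rewrite take_mkseq; last by lia.
  rewrite /mkseq; apply/eq_in_map => m; rewrite mem_iota /g => /andP [_ Hm]; rewrite ifT //; lia.
- case: z' {Hz' Hsz'} => [v p|h] // [] Hfh.
  have := congr1 (fun F => F l) Hfh; rewrite size_map size_iota ltnSn nth_mkseq //.
  by rewrite /g ltnn => H; apply: Hne.
Qed.

Lemma wmul_nil_r (w : word E) : reduced w -> wmul w [::] = w.
Proof.
elim: w => [|l w IH] // Hr; rewrite /wmul /= -/(wmul w [::]) IH; last first.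
  by move: Hr; rewrite /reduced /=; apply: path_sorted.
case: w Hr {IH} => [|l' w] //= /andP [Hn _].
move: Hn; rewrite /not_cancel; case: ifP => // /andP [/eqP H1 H2].
by rewrite H1 eqxx eq_sym H2.
Qed.

Lemma coef_cons pr (x : cp E K) t xi :
  coef (pr :: x) t xi = (if pr.1 == t then pr.2 xi else 0) + coef x t xi.
Proof. by rewrite /coef big_cons; case: ifP => _ //; rewrite add0r. Qed.

Lemma coef_nil t xi : coef ([::] : cp E K) t xi = 0.
Proof. by rewrite /coef big_nil. Qed.

Lemma cp_elem_cons pr (x : cp E K) : cp_elem X (pr :: x) -> (reduced pr.1 /\ Dt X pr.1 pr.2) /\ cp_elem X x.
Proof. by move=> H; split; [apply: H; left|move=> q Hq; apply: H; right]. Qed.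

Definition Gx (x : cp E K) t xi : K :=
  if decP (U X t xi) then \sum_(p <- x | p.1 == t) alpha X (winv t) p.2 (theta (winv t) xi) else 0.

Lemma coef_mulr (x : cp E K) b t xi : cp_elem X x ->
  coef (cp_mul X x (delta0 b)) t xi = Gx x t xi * b (theta (winv t) xi).
Proof.
rewrite /Gx; elim: x => [|pr x IH] Hx; first by rewrite /coef big_nil; case: ifP; rewrite ?big_nil mul0r.
have [[Hr _] Hx'] := cp_elem_cons Hx.
rewrite /cp_mul /= -/(cp_mul X x (delta0 b)) coef_cons /= IH // wmul_nil_r //.
rewrite big_cons; case: eqP => [<-|_]; last by rewrite add0r.
rewrite /alpha; case: decP; last by rewrite !mul0r add0r.
by rewrite mulrDl.
Qed.

Lemma theta_nil xi : theta (winv ([::] : word E)) xi = xi.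
Proof. by []. Qed.

Lemma coef_mull (x : cp E K) b t xi :
  coef (cp_mul X (delta0 b) x) t xi = if decP (boundary X xi) then b xi * coef x t xi else 0.
Proof.
elim: x => [|pr x IH]; first by rewrite /coef big_nil; case: ifP; rewrite ?big_nil ?mulr0.
have -> : cp_mul X (delta0 b) (pr :: x) =
  (pr.1, alpha X [::] (fun xi => alpha X (winv [::]) b xi * pr.2 xi)) :: cp_mul X (delta0 b) x.
  by rewrite /cp_mul /= !cats0.
rewrite coef_cons IH /= coef_cons /alpha /=.
case: decP; last by rewrite addr0; case: ifP.
rewrite !theta_nil mulrDr; case: ifP => _ //; by rewrite mulr0.
Qed.

Lemma coef_delta0 (a : fn E K) t xi : coef (delta0 a) t xi = if [::] == t then a xi else 0.
Proof. by rewrite /delta0 coef_cons coef_nil addr0. Qed.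


Lemma coef_closed (Pr : fn E K -> Prop) (x : cp E K) t :
  Pr (fun _ => 0) -> (forall f g, Pr f -> Pr g -> Pr (fun xi => f xi + g xi)) ->
  (forall pr, List.In pr x -> pr.1 = t -> Pr pr.2) -> Pr (coef x t).
Proof.
move=> H0 Hadd; elim: x => [|pr x IH] Hx.
  by have -> : coef ([::] : cp E K) t = (fun _ => 0) by apply: functional_extensionality => xi; rewrite coef_nil.
have -> : coef (pr :: x) t = (fun xi => (if pr.1 == t then pr.2 xi else 0) + coef x t xi).
  by apply: functional_extensionality => xi; rewrite coef_cons.
have IH' : Pr (coef x t) by apply: IH => q Hq; apply: Hx; right.
case: eqP => Ht.
  by apply: Hadd => //; apply: Hx => //; left.
by have -> : (fun xi => 0 + coef x t xi) = coef x t by apply: functional_extensionality => xi; rewrite add0r.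
Qed.

Lemma span_add (S : fn E K -> Prop) f g : span S f -> span S g -> span S (fun xi => f xi + g xi).
Proof.
move=> Hf Hg; have := span_lin 1 Hf Hg.
by have -> // : (fun xi => 1 * f xi + g xi) = (fun xi => f xi + g xi) by apply: functional_extensionality => xi; rewrite mul1r.
Qed.

Lemma span_ind_pr (S : fn E K -> Prop) (Pr : fn E K -> Prop) :
  Pr (fun _ => 0) -> (forall k g f, S g -> Pr f -> Pr (fun xi => k * g xi + f xi)) ->
  forall f, span S f -> Pr f.
Proof. by move=> H0 HS f; elim => // k g f' Hg _ IH; apply: HS. Qed.

Definition Van t (f : fn E K) := forall xi, ~ U X t xi -> f xi = 0.

Lemma Dp_Van t f : Dp X t f -> Van t f.
Proof.
apply: span_ind_pr => [xi _ //|k g f' [q [_ ->]] Hf xi Hxi].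
by rewrite /one indF // mul0r mulr0 add0r Hf.
Qed.

Definition loc (f : fn E K) := exists L, forall xi zeta, boundary X xi -> boundary X zeta ->
  bsrc xi = bsrc zeta -> pre L xi = pre L zeta -> f xi = f zeta.

Lemma loc_mono (f : fn E K) L L' : (L <= L')%N -> (forall xi zeta, boundary X xi -> boundary X zeta ->
  bsrc xi = bsrc zeta -> pre L xi = pre L zeta -> f xi = f zeta) ->
  forall xi zeta, boundary X xi -> boundary X zeta ->
  bsrc xi = bsrc zeta -> pre L' xi = pre L' zeta -> f xi = f zeta.
Proof. by move=> HL H xi zeta H1 H2 H3 H4; apply: H => //; rewrite !(pre_take _ HL) H4. Qed.

Lemma loc_lin k (g f : fn E K) : loc g -> loc f -> loc (fun xi => k * g xi + f xi).
Proof.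
move=> [L1 H1] [L2 H2]; exists (maxn L1 L2) => xi zeta B1 B2 S P.
rewrite (loc_mono (leq_maxl L1 L2) H1 B1 B2 S P) (loc_mono (leq_maxr L1 L2) H2 B1 B2 S P) //.
Qed.

Lemma loc_mul (g f : fn E K) : loc g -> loc f -> loc (fun xi => g xi * f xi).
Proof.
move=> [L1 H1] [L2 H2]; exists (maxn L1 L2) => xi zeta B1 B2 S P.
rewrite (loc_mono (leq_maxl L1 L2) H1 B1 B2 S P) (loc_mono (leq_maxr L1 L2) H2 B1 B2 S P) //.
Qed.

Lemma decP_iff (P Q : Prop) : (P <-> Q) -> decP P = decP Q.
Proof.
move=> H; case: (classic P) => HP; first by rewrite !decPT //; apply/H.
by rewrite !decPF // => HQ; apply/HP/H.
Qed.

Lemma one_loc q : loc (one X K q).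
Proof.
rewrite /one /ind /U; case: (classify q) => [|a|b|a b|].
- by exists 0%N => xi zeta B1 B2 _ _; rewrite !decPT.
- exists (size a) => xi zeta B1 B2 _ P; congr (if _ then _ else _); apply: decP_iff.
  by split=> -[_ /hasprefixE H]; split=> //; apply/hasprefixE; rewrite ?P // -P.
- exists 0%N => xi zeta B1 B2 S _; congr (if _ then _ else _); apply: decP_iff; rewrite S; split => -[_ H]; by split.
- exists (size a) => xi zeta B1 B2 _ P; congr (if _ then _ else _); apply: decP_iff.
  by split=> -[_ /hasprefixE H]; split=> //; apply/hasprefixE; rewrite ?P // -P.
- by exists 0%N => xi zeta B1 B2 _ _; rewrite !decPF.
Qed.

Lemma loc0 : loc (fun _ => 0).
Proof. by exists 0%N. Qed.

Lemma Dp_loc t f : Dp X t f -> loc f.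
Proof.
apply: span_ind_pr => [|k g f' [q [_ ->]] Hf]; first exact: loc0.
by apply: loc_lin => //; apply: loc_mul; apply: one_loc.
Qed.


Lemma U_boundary t xi : U X t xi -> boundary X xi.
Proof. rewrite /U; case: classify => [|a|b|a b|] //; by move=> [H _]. Qed.

Lemma loc_add (g f : fn E K) : loc g -> loc f -> loc (fun xi => g xi + f xi).
Proof.
move=> Hg Hf; have := loc_lin 1 Hg Hf.
by have -> // : (fun xi => 1 * g xi + f xi) = (fun xi => g xi + f xi) by apply: functional_extensionality => xi; rewrite mul1r.
Qed.

Lemma dir1 : rel_condL X -> D0_maximal_commutative X K.
Proof.
move=> HL x Hx Hc; exists (coef x [::]); split.
  apply: coef_closed => [|f g|pr Hin Ht]; first exact: span0.
    exact: span_add.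
  by have [_] := Hx pr Hin; rewrite /Dt Ht.
move=> t xi; rewrite coef_delta0; case: eqP => [<- //|Ht].
case: (eqVneq (coef x t xi) 0) => // Hnz; exfalso.
have Ht' : (t == [::]) = false by apply/eqP => H; apply: Ht.
have HDp : forall pr, List.In pr x -> pr.1 = t -> Dp X t pr.2.
  by move=> pr Hin Hpt; have [_] := Hx pr Hin; rewrite /Dt Hpt Ht'.
set F := coef x t.
have HVan : Van t F.
  apply: coef_closed => [|f g Hf Hg|pr Hin Hpt] //; first by move=> z Hz; rewrite Hf // Hg // addr0.
  by apply: Dp_Van; apply: HDp.
have [L HLoc] : loc F.
  apply: coef_closed => [|f g|pr Hin Hpt]; first exact: loc0.
    exact: loc_add.
  by apply: Dp_loc; apply: HDp.
have Hkey : forall z, boundary X z -> theta (winv t) z <> z -> F z = 0.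
  move=> z Hz Hth; have [b [Hb Hb1 Hb0]] := sep Hz (nesym Hth).
  have := Hc b Hb t z; rewrite coef_mulr // coef_mull decPT // Hb0 Hb1 mulr0 mul1r.
  by move=> H; rewrite /F -H.
have {}Hnz : F xi <> 0 by apply/eqP.
have Hu : U X t xi by apply: NNPP => H; apply: Hnz; apply: HVan.
have Hcl : classify t <> KNone E by move=> Hk; move: Hu; rewrite /U Hk.
have [a [u [Hua Hform]]] := theta_form (negbT Ht') Hcl.
have [Hpre Hth] := Hform xi Hu.
have Hfix : theta (winv t) xi = xi by apply: NNPP => H; apply: Hnz; apply: Hkey => //; apply: U_boundary Hu.
have [f [Hxf [Hk Hper]]] := fixed_periodic Hua Hpre (esym (etrans (esym Hfix) Hth)).
set N := (L + size a + per a u)%N.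
have Hbx := U_boundary Hu.
have [z [Hbz Hsz Hpz Hzx]] := witness N HL (eq_ind _ _ Hbx _ Hxf) Hk Hper.
have HFz : F z = F xi.
  apply: HLoc => //; first by rewrite Hxf.
  have HLN : (L <= N)%N by rewrite /N; lia.
  by rewrite (@pre_take L N z HLN) (@pre_take L N xi HLN) Hpz Hxf.
have Hfz : theta (winv t) z = z.
  by apply: NNPP => H; apply: Hnz; rewrite -HFz; apply: Hkey.
have Huz : U X t z by apply: NNPP => H; apply: Hnz; rewrite -HFz; apply: HVan.
have [Hprez Hthz] := Hform z Huz.
have [g [Hzg [_ Hperg]]] := fixed_periodic Hua Hprez (esym (etrans (esym Hfz) Hthz)).
apply: Hzx; rewrite Hzg; congr BInf; apply: (@per_eq g f (size a) (per a u) N) => //.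
  by rewrite /N; lia.
move=> j Hj; move: Hpz; rewrite Hzg /= => Hm.
by rewrite -(nth_mkseq (f 0%N) g Hj) Hm nth_mkseq.
Qed.

Definition cinf (e0 : Ed) (c : seq Ed) (i : nat) := nth e0 c (i %% size c).

Lemma cinf_valid e0 c' : sorted (@consec E) (e0 :: c') -> r (last e0 c') = s e0 ->
  forall i, r (cinf e0 (e0 :: c') i) = s (cinf e0 (e0 :: c') i.+1).
Proof.
move=> Hs Hcl i; rewrite /cinf; set c := e0 :: c'; set n := size c.
have Hn : (0 < n)%N by [].
set j := (i %% n)%N.
have Hj : (j < n)%N by apply: ltn_pmod.
have Hi1 : (i.+1 %% n = if (j.+1 < n)%N then j.+1 else 0)%N.
  rewrite {1}(divn_eq i n) -addnS modnMDl -/j; case: ifP => H; first by rewrite modn_small.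
  move/negbT: H; rewrite -leqNgt => H; have -> : j.+1 = n by apply/eqP; rewrite eqn_leq H Hj.
  by rewrite modnn.
rewrite Hi1; case: ifP => H.
  by move/(sortedP e0): Hs => /(_ j H) /eqP.
move/negbT: H; rewrite -leqNgt => H.
have -> : j = (size c).-1 by rewrite /n in Hj H; lia.
by rewrite nth_last /= Hcl.
Qed.

Lemma cinf_per e0 (c : seq Ed) i : cinf e0 c (i + size c) = cinf e0 c i.
Proof. by rewrite /cinf modnDr. Qed.

Lemma cinf_small e0 (c : seq Ed) i : (i < size c)%N -> cinf e0 c i = nth e0 c i.
Proof. by move=> H; rewrite /cinf modn_small. Qed.

Lemma mkseq_cinf e0 (c : seq Ed) : mkseq (cinf e0 c) (size c) = c.
Proof.
apply: (@eq_from_nth _ e0); first by rewrite size_mkseq.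
by move=> i; rewrite size_mkseq => H; rewrite nth_mkseq // cinf_small.
Qed.


Lemma classify_pos (c : seq Ed) : ispath c -> classify (pos c) = KPos c.
Proof.
case: c => [|e c] // H.
have -> : pos (e :: c) = pos (e :: c) ++ neg [::] by rewrite /neg /= cats0.
by rewrite classify_pn /= H.
Qed.

Lemma classify_neg (c : seq Ed) : ispath c -> classify (neg c) = KNeg c.
Proof.
case: c => [|e c] // H.
have -> : neg (e :: c) = pos [::] ++ neg (e :: c) by [].
by rewrite classify_pn /= neg_cons0 H.
Qed.

Lemma U_cycle e0 c' : sorted (@consec E) (e0 :: c') -> r (last e0 c') = s e0 ->
  (forall e i, (i < size (e0 :: c'))%N -> s e = s (nth e (e0 :: c') i) -> e = nth e (e0 :: c') i) ->
  (forall e, e \in e0 :: c' -> ~ Yset X (s e)) ->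
  forall xi, boundary X xi -> hasprefix xi (e0 :: c') -> xi = BInf (cinf e0 (e0 :: c')).
Proof.
set c := e0 :: c'; move=> Hs Hcl Hno HnY xi.
have Hn : (0 < size c)%N by [].
have Hne : forall e i, s e = s (cinf e0 c i) -> e = cinf e0 c i.
  move=> e i; rewrite /cinf => H.
  rewrite (Hno e (i %% size c)%N (ltn_pmod _ Hn)) -?H; last by rewrite (set_nth_default e0) // ltn_pmod.
  by rewrite (set_nth_default e0) // ltn_pmod.
have Hv := cinf_valid Hs Hcl.
case: xi => [v p|f] /=.
  move=> [[Hsp Hh] Hb]; rewrite prefixE => /eqP Hp.
  have Hsz : (size c <= size p)%N by rewrite -Hp size_take_min geq_minr.
  have Hnth : forall i, (i < size p)%N -> nth e0 p i = cinf e0 c i.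
    elim=> [|i IH] Hi.
      by rewrite /cinf mod0n -Hp nth_take.
    apply: Hne; rewrite -Hv -IH; last by lia.
    by move/(sortedP e0): Hsp => /(_ i Hi) /eqP.
  have Hfr : frange v p = s (cinf e0 c (size p)).
    have Hl : frange v p = r (nth e0 p (size p).-1).
      rewrite /frange nth_last; case Hpp: p => [|e p']; first by rewrite Hpp /= in Hsz.
      by rewrite /= last_map.
    have Hp1 : (0 < size p)%N by apply: leq_trans Hsz.
    rewrite Hl Hnth; last by rewrite prednK.
    by rewrite Hv prednK.
  exfalso; rewrite Hfr in Hb; case: Hb => [Hsk|HY].
    by apply: (Hsk (cinf e0 c (size p))).
  apply: (HnY (cinf e0 c (size p))) => //.
  by rewrite /cinf mem_nth // ltn_pmod.
move=> [Hf _] Hp; congr BInf; apply: functional_extensionality.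
elim=> [|i IH].
  by have := nth_mkseq e0 f Hn; rewrite -Hp /cinf mod0n => ->.
by apply: Hne; rewrite -Hv -IH Hf.
Qed.


Lemma dir2 : D0_maximal_commutative X K -> rel_condL X.
Proof.
move=> HM c Hcyc HnY; apply: NNPP => Hnex.
have Hno : forall e i, (i < size c)%N -> s e = s (nth e c i) -> e = nth e c i.
  by move=> e i Hi Hs; apply: NNPP => Hne; apply: Hnex; exists e, i.
case: Hcyc => [Hp [Hcl _]].
case: c Hp Hcl Hno HnY {Hnex} => [|e0 c'] // Hp Hcl Hno HnY.
have Hs : sorted (@consec E) (e0 :: c') by case/andP: Hp.
set ci := cinf e0 (e0 :: c').
have Hv := cinf_valid Hs Hcl.
have Hbc : boundary X (BInf ci) by split.
have Hpc : hasprefix (BInf ci) (e0 :: c') by rewrite /= mkseq_cinf.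
have Huc : forall xi, U X (pos (e0 :: c')) xi -> xi = BInf ci.
  by move=> xi /(U_pos _ Hp) [H1 H2]; apply: U_cycle.
have HUci : U X (pos (e0 :: c')) (BInf ci) by apply/U_pos.
set tc := pos (e0 :: c').
have Htc0 : (tc == [::]) = false by [].
pose x : cp E K := [:: (tc, one X K tc)].
have Hx : cp_elem X x.
  move=> pr /= [<-|[]]; split; first exact: reduced_pos.
  rewrite /Dt /=; apply: span_gen; exists [::]; split => //.
  apply: functional_extensionality => xi.
  case: (classic (U X tc xi)) => H; last by rewrite /one indF // mul0r.
  by rewrite /one !indT //; [rewrite mulr1|apply: U_boundary H].
have Hth1 : theta (winv tc) (BInf ci) = BInf ci.
  rewrite winv_pos /theta classify_neg //=; congr BInf.
  by apply: functional_extensionality => i; exact: (cinf_per e0 (e0 :: c') i).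
have Hth2 : theta (winv (winv tc)) (BInf ci) = BInf ci.
  rewrite winv_pos winv_neg /theta classify_pos //=; congr BInf.
  apply: functional_extensionality => i; case: ifP => H.
    by rewrite /ci [RHS]cinf_small // (set_nth_default e0).
  have := cinf_per e0 (e0 :: c') (i - (size c').+1)%N; rewrite /= subnK; last by rewrite leqNgt H.
  by [].
have Hal : alpha X (winv tc) (one X K tc) (BInf ci) = 1.
  rewrite /alpha decPT; first by rewrite Hth2 /one indT.
  rewrite winv_pos /U classify_neg //; split => //=.
have Hcomm : forall b, D0 X b -> cp_eq (cp_mul X x (delta0 b)) (cp_mul X (delta0 b) x).
  move=> b Hb t xi; rewrite coef_mulr // coef_mull /Gx big_cons big_nil /= coef_cons coef_nil !addr0.
  case: (eqVneq tc t) => [<-|Hne]; last by rewrite if_same mul0r; case: decP; rewrite ?mulr0.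
  case: (classic (U X tc xi)) => H.
    have Hxi := Huc xi H; rewrite (decPT H) Hxi Hth1 Hal (decPT Hbc).
    by rewrite /= /one indT // mul1r mulr1.
  by rewrite (decPF H) mul0r /= /one indF // mulr0; case: decP.
have [a [Ha Heq]] := HM x Hx Hcomm.
have := Heq tc (BInf ci); rewrite coef_delta0 eq_sym Htc0 coef_cons eqxx coef_nil addr0.
by rewrite /= /one indT // => /eqP; rewrite oner_eq0.
Qed.

End Main.

Theorem mainTheorem8 (E : graph) (X : vert E -> Prop) (K : fieldType)
  (HX : forall v, X v -> is_regular v) :
  D0_maximal_commutative X K <-> rel_condL X.
Proof. split; [exact: dir2 | exact: dir1]. Qed.
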